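(* For non-negative random variables $Y$ and $Z$ satisfying $0\le Y+Z\le1$, we have $\operatorname{Var}[YZ]\le 8\big(\operatorname{Var}[Y]+\operatorname{Var}[Z]\big)$. *)

(* Defs.v *)
From HB Require Import structures.
From mathcomp Require Import all_boot all_order all_algebra.
From mathcomp Require Import all_classical all_reals all_analysis.

(* Main.v *)
Require Import Defs.
From HB Require Import structures.
From mathcomp Require Import all_boot all_order all_algebra.
From mathcomp Require Import all_classical all_reals all_analysis.
From mathcomp Require Import ring lra measurable_realfun.
Import Order.TTheory GRing.Theory Num.Theory.
Local Open Scope ring_scope.

Lemma pw (R : realType) (y z a b : R) : 0 <= y -> 0 <= z -> y + z <= 1 -> 0 <= a -> a <= 1 ->
  (y * z - a * b) ^+ 2 <= 2 * (y - a) ^+ 2 + 2 * (z - b) ^+ 2.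
Proof.
move=> y0 z0 yz a0 a1.
have e : y * z - a * b = (y - a) * z + a * (z - b) by ring.
rewrite e.
have h1 : ((y - a) * z) ^+ 2 <= (y - a) ^+ 2.
  rewrite exprMn -[X in _ <= X]mulr1; apply: ler_wpM2l; first exact: sqr_ge0.
  nra.
have h2 : (a * (z - b)) ^+ 2 <= (z - b) ^+ 2.
  rewrite exprMn -[X in _ <= X]mul1r; apply: ler_wpM2r; first exact: sqr_ge0.
  nra.
have h3 : forall u v : R, (u + v) ^+ 2 <= 2 * u ^+ 2 + 2 * v ^+ 2.
  move=> u v; have := sqr_ge0 (u - v); nra.
apply: le_trans (h3 _ _) _; lra.
Qed.

Section S.
Context {d} {T : measurableType d} {R : realType} (P : probability T R).

Lemma L2b {f : T -> R} {M : R} : measurable_fun setT f -> (forall x, `|f x| <= M) ->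
  f \in Lfun P 2%:E.
Proof.
move=> mf fM.
rewrite inE/=; apply/andP; split; rewrite inE//=.
rewrite /finite_norm unlock poweR_lty//.
rewrite (@eq_integral _ _ _ _ _ (fun x => (`|f x| ^+ 2)%:E)); last first.
  by move=> x _; rewrite /comp abse_EFin poweR_EFin powR_mulrn.
apply: (@le_lt_trans _ _ (\int[P]_x (M^+2)%:E)%E).
  apply: ge0_le_integral => //.
  - apply/measurable_EFinP => /=; apply: measurable_funX; exact: measurableT_comp.
  - move=> x _ /=; rewrite lee_fin; apply: lerXn2r => //; rewrite ?nnegrE //.
    exact: le_trans (fM x).
rewrite integral_cst //= probability_setT mule1; exact: ltry.
Qed.

Lemma var_le (X : T -> R) c : X \in Lfun P 2%:E ->
  ('V_P[X] <= 'E_P[(X \- cst c) ^+ 2])%E.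
Proof.
move=> X2.
have Xc : (X \- cst c)%R \in Lfun P 2%:E.
  rewrite rpredB //; first by rewrite lee1n.
  by move=> ?; apply: Lfun_cst.
rewrite -(varianceB_cst_r c X2) varianceE //.
rewrite -[X in (_ <= X)%E]sube0; apply: leeB => //.
rewrite -[X in (_ <= X ^+ 2)%E](@fineK _ ('E_P[X \- cst c])); last first.
  apply: expectation_fin_num; exact: (Lfun_subset12 (fin_num_measure P _ measurableT) Xc).
by rewrite -EFin_expe lee_fin sqr_ge0.
Qed.

End S.

Theorem corollary1 (d : measure_display) (T : measurableType d) (R : realType)
  (P : probability T R) (Y Z : {RV P >-> R})
  (hY : forall w, 0 <= Y w) (hZ : forall w, 0 <= Z w)
  (hYZ : forall w, Y w + Z w <= 1) :
  ('V_P[(Y \* Z)%R] <= 8%:E * ('V_P[Y] + 'V_P[Z]))%E.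
Proof.
have mY : measurable_fun setT Y by [].
have mZ : measurable_fun setT Z by [].
have Y1 w : `|Y w| <= 1.
  by rewrite ger0_norm //; have := hZ w; have := hYZ w; lra.
have Z1 w : `|Z w| <= 1.
  by rewrite ger0_norm //; have := hY w; have := hYZ w; lra.
have Pfin : P setT \is a fin_num := fin_num_measure P _ measurableT.
have Y2 : (Y : T -> R) \in Lfun P 2%:E := L2b P mY Y1.
have Z2 : (Z : T -> R) \in Lfun P 2%:E := L2b P mZ Z1.
have mW : measurable_fun setT (Y \* Z)%R by apply: measurable_funM.
have W2 : (Y \* Z)%R \in Lfun P 2%:E.
  apply: (@L2b _ _ _ P _ 1 mW) => w /=; rewrite normrM -[X in _ <= X](mulr1 1); apply: ler_pM => //.
set a := fine ('E_P[Y])%E.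
set b := fine ('E_P[Z])%E.
have EY1 : ('E_P[Y])%E \is a fin_num.
  by apply: expectation_fin_num; apply: (Lfun_subset12 _ Y2); exact: fin_num_measure.
have a0 : 0 <= a.
  by rewrite /a -lee_fin fineK //; apply: expectation_ge0.
have a1 : a <= 1.
  rewrite /a -lee_fin fineK // -(expectation_cst P 1).
  apply: expectation_le => //.
  by apply: aeW => w /=; have := hZ w; have := hYZ w; lra.
have EZ1 : ('E_P[Z])%E \is a fin_num.
  by apply: expectation_fin_num; apply: (Lfun_subset12 _ Z2); exact: fin_num_measure.
have b0 : 0 <= b.
  by rewrite /b -lee_fin fineK //; apply: expectation_ge0.
have b1 : b <= 1.
  rewrite /b -lee_fin fineK // -(expectation_cst P 1).
  apply: expectation_le => //.
  by apply: aeW => w /=; have := hY w; have := hYZ w; lra.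
have mYa : measurable_fun setT (Y \- cst a)%R by apply: measurable_funB.
have mZb : measurable_fun setT (Z \- cst b)%R by apply: measurable_funB.
have mYa2 : measurable_fun setT (fun x => (Y x - a) ^+ 2) by apply: measurable_funX.
have mZb2 : measurable_fun setT (fun x => (Z x - b) ^+ 2) by apply: measurable_funX.
have LYa : (fun x => (Y x - a) ^+ 2) \in Lfun P 1.
  apply: (Lfun_subset12 (fin_num_measure P _ measurableT)).
  apply: (@L2b _ _ _ P _ 1 mYa2) => w /=.
  rewrite ger0_norm ?sqr_ge0 //; have := hY w; have := Y1 w; have := hYZ w; have := hZ w.
  move=> *; nra.
have LZb : (fun x => (Z x - b) ^+ 2) \in Lfun P 1.
  apply: (Lfun_subset12 (fin_num_measure P _ measurableT)).
  apply: (@L2b _ _ _ P _ 1 mZb2) => w /=.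
  rewrite ger0_norm ?sqr_ge0 //; have := hY w; have := Z1 w; have := hYZ w; have := hZ w.
  move=> *; nra.
have VY : ('V_P[Y] = 'E_P[(fun x => (Y x - a) ^+ 2)%R])%E.
  by rewrite /variance covariance.unlock; congr expectation; apply/funext => x /=; rewrite expr2.
have VZ : ('V_P[Z] = 'E_P[(fun x => (Z x - b) ^+ 2)%R])%E.
  by rewrite /variance covariance.unlock; congr expectation; apply/funext => x /=; rewrite expr2.
have V1 := @var_le _ _ _ P _ (a * b) W2.
have E1 : ('E_P[(((Y \* Z) \- cst (a * b)) ^+ 2)%R] <=
    'E_P[(fun x => 2 * (Y x - a) ^+ 2 + 2 * (Z x - b) ^+ 2)%R])%E.
  have -> : (((Y \* Z) \- cst (a * b)) ^+ 2)%R = (fun x => (Y x * Z x - a * b) ^+ 2).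
    by apply/funext => x.
  apply: expectation_le => //.
  - apply: measurable_funX; apply: measurable_funB => //.
  - apply: measurable_funD; apply: measurable_funM => //.
  - by move=> x; exact: sqr_ge0.
  - by move=> x; apply: addr_ge0; apply: mulr_ge0 => //; exact: sqr_ge0.
  - by apply: aeW => w /=; apply: pw.
have E2 : ('E_P[(fun x => 2 * (Y x - a) ^+ 2 + 2 * (Z x - b) ^+ 2)%R] =
    2%:E * 'V_P[Y] + 2%:E * 'V_P[Z])%E.
  rewrite VY VZ -!expectationZl //.
  rewrite -expectationD; first by apply: congr1; apply/funext => x /=; ring.
  - exact: (@Lfun_scale _ _ _ P _ 2 1 (lexx _) LYa).
  - exact: (@Lfun_scale _ _ _ P _ 2 1 (lexx _) LZb).
apply: le_trans V1 _; apply: le_trans E1 _; rewrite E2.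
have VYf : ('V_P[Y])%E \is a fin_num by apply: variance_fin_num.
have VZf : ('V_P[Z])%E \is a fin_num by apply: variance_fin_num.
have VY0 : 0 <= fine ('V_P[Y])%E by apply: fine_ge0; apply: variance_ge0.
have VZ0 : 0 <= fine ('V_P[Z])%E by apply: fine_ge0; apply: variance_ge0.
rewrite -(fineK VYf) -(fineK VZf) -!EFinM -!EFinD lee_fin.
lra.
Qed.
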